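(* Let $t\in\mathbb{N}$. There exists $n_0(t)$ such that for all $n\ge n_0(t)$, if $\mathcal{F},\mathcal{G}\subseteq\mathcal{M}_{2n-1}$ are $t$-cross-intersecting, then $|\mathcal{F}|\cdot|\mathcal{G}|\le\big((2(n-t)-1)!!\big)^2$.
   Context: $\mathcal{M}_{2n-1}$ is the set of near-perfect matchings of the complete graph $K_{2n-1}$ (matchings with $n-1$ edges). Families $\mathcal{F},\mathcal{G}$ are $t$-cross-intersecting if $|m\cap m'|\ge t$ for all $m\in\mathcal{F}$, $m'\in\mathcal{G}$. $(2k-1)!!=1\cdot3\cdots(2k-1)$. *)

(* Defs.v *)
From mathcomp Require Import all_boot.
Set Implicit Arguments. Unset Strict Implicit. Unset Printing Implicit Defensive.

(* Complete graph K_m on vertex set 'I_m; an edge is a 2-subset of vertices. *)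
Definition is_edge (m : nat) (e : {set 'I_m}) : bool := #|e| == 2.

Definition is_matching (m : nat) (M : {set {set 'I_m}}) : bool :=
  [forall e in M, is_edge e] &&
  [forall e in M, forall f in M, (e != f) ==> [disjoint e & f]].

(* M_{2n-1}: near-perfect matchings of K_{2n-1}, i.e. matchings with n-1 edges. *)
Definition near_perfect_matchings (n : nat) : {set {set {set 'I_(2 * n - 1)}}} :=
  [set M | is_matching M && (#|M| == n - 1)].

Definition t_cross_intersecting (m t : nat) (F G : {set {set {set 'I_m}}}) : Prop :=
  forall M M', M \in F -> M' \in G -> t <= #|M :&: M'|.

(* dfact k = (2k-1)!! = 1 * 3 * ... * (2k-1); dfact 0 = 1 = (-1)!!. *)
Definition dfact (k : nat) : nat := \prod_(i < k) (2 * i + 1).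

(* Main.v *)
Require Import Defs.
From mathcomp Require Import all_boot.
From mathcomp Require Import zify.
Set Implicit Arguments. Unset Strict Implicit. Unset Printing Implicit Defensive.

Lemma card_bigcup_le (I T : finType) (P : pred I) (F : I -> {set T}) :
  #|\bigcup_(i | P i) F i| <= \sum_(i | P i) #|F i|.
Proof.
elim/big_rec2: _ => [|i x y _ Hxy]; first by rewrite cards0.
by rewrite (leq_trans (leq_card_setU _ _)) ?leq_add2l.
Qed.



Lemma ffact_le_exp m k : m ^_ k <= m ^ k.
Proof.
elim: k m => [|k IH] m; first by rewrite ffactn0 expn0.
rewrite ffactnS expnS leq_mul2l; apply/orP; right.
apply: leq_trans (IH _) _.
case: k {IH} => [|k]; first by [].
by rewrite leq_exp2r // leq_pred.
Qed.

Lemma bin_le_exp m k : 'C(m, k) <= m ^ k.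
Proof.
apply: leq_trans (ffact_le_exp m k); rewrite -bin_ffact.
by rewrite leq_pmulr // fact_gt0.
Qed.

Lemma dfactS k : dfact k.+1 = dfact k * (2 * k + 1).
Proof. by rewrite /dfact big_ord_recr. Qed.

Lemma dfact_gt0 k : 0 < dfact k.
Proof. by rewrite /dfact prodn_gt0 // => i; rewrite addn1. Qed.

Lemma dfact_mono k l : k <= l -> dfact k <= dfact l.
Proof.
move=> /subnKC <-; elim: (l - k) => [|m IH]; first by rewrite addn0.
by rewrite addnS dfactS (leq_trans IH) // leq_pmulr // addn1.
Qed.

Definition mt (V : finType) (W : {set V}) (k : nat) (M : {set {set V}}) : bool :=
  [&& [forall e in M, (#|e| == 2) && (e \subset W)], trivIset M & #|M| == k].

Lemma mt_cover (V : finType) (W : {set V}) k M : mt W k M -> #|cover M| = 2 * k.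
Proof.
case/and3P=> /forall_inP He tM /eqP <-.
rewrite -(eqP tM) (eq_bigr (fun _ => 2)) ?sum_nat_const 1?mulnC //.
by move=> e /He /andP[/eqP].
Qed.

Lemma mt_coverW (V : finType) (W : {set V}) k M : mt W k M -> cover M \subset W.
Proof.
case/and3P=> /forall_inP He _ _; apply/bigcupsP => e /He /andP[_ //].
Qed.

Lemma mt_perf (V : finType) k (W : {set V}) :
  #|W| = 2 * k -> #|[set M | mt W k M]| <= dfact k.
Proof.
elim: k W => [|k IH] W HW.
  rewrite /dfact big_ord0.
  apply: leq_trans (subset_leq_card (_ : _ \subset [set set0])) _; last by rewrite cards1.
  apply/subsetP => M; rewrite !inE => /and3P[_ _]; by rewrite cards_eq0.
have : 0 < #|W| by rewrite HW muln_gt0.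
case/card_gt0P => v vW.
pose f w := [set M | mt W k.+1 M & [set v; w] \in M].
have sub : [set M | mt W k.+1 M] \subset \bigcup_(w in W :\ v) f w.
  apply/subsetP => M; rewrite inE => HM.
  have cW : cover M = W.
    apply/eqP; rewrite eqEcard (mt_coverW HM) /= (mt_cover HM) HW //.
  have : v \in cover M by rewrite cW.
  case/bigcupP => e eM ve.
  have /andP[/cards2P [x [y [xy Exy]]] eW] : (#|e| == 2) && (e \subset W).
    by case/and3P: HM => /forall_inP /(_ e eM).
  have [w [wW wv Ew]] : exists w, [/\ w \in W, w != v & e = [set v; w]].
    move: ve; rewrite Exy !inE => /orP[] /eqP ->.
      exists y; split => //; last by rewrite eq_sym.
      by apply: (subsetP eW); rewrite Exy !inE eqxx orbT.
    exists x; split => //; first by apply: (subsetP eW); rewrite Exy !inE eqxx.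
    by rewrite setUC.
  apply/bigcupP; exists w; first by rewrite !inE wv.
  by rewrite inE HM -Ew.
apply: leq_trans (subset_leq_card sub) _.
apply: leq_trans (card_bigcup_le _ _) _.
apply: leq_trans (_ : \sum_(w in W :\ v) dfact k <= _).
  apply: leq_sum => w; rewrite !inE => /andP[wv wW].
  set e := [set v; w].
  have eW : e \subset W by apply/subsetP => x; rewrite !inE => /orP[] /eqP ->.
  have ce : #|e| = 2 by rewrite cards2 eq_sym wv.
  apply: leq_trans (IH (W :\: e) _); last by rewrite cardsDS // HW ce mulnS addSn add1n subSS subSS subn0.
  rewrite -(@card_in_imset _ _ (fun M => M :\ e)); last first.
    move=> M1 M2; rewrite !inE => /andP[_ H1] /andP[_ H2] E.
    by rewrite -(setD1K H1) -(setD1K H2) E.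
  apply: subset_leq_card; apply/subsetP => M' /imsetP [M]; rewrite inE => /andP[HM eM] ->.
  rewrite inE; case/and3P: HM => /forall_inP He tM /eqP cM.
  apply/and3P; split.
  - apply/forall_inP => e'; rewrite !inE => /andP[e'e e'M].
    have /andP[-> e'W] := He e' e'M; rewrite /=.
    have := trivIsetP tM e' e e'M eM e'e; rewrite -setI_eq0 => /eqP dis.
    apply/subsetP => x xe'; rewrite inE (subsetP e'W) // andbT.
    apply/negP => xe; have : x \in e' :&: e by rewrite inE xe' xe.
    by rewrite dis inE.
  - by apply: trivIsetS tM; apply: subD1set.
  - by move: cM; rewrite (cardsD1 e) eM add1n => [[->]].
rewrite sum_nat_const dfactS mulnC; apply: leq_mul => //.
by move: (cardsD1 v W); rewrite vW HW; lia.
Qed.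

Lemma mt_near (V : finType) k (W : {set V}) :
  #|W| = (2 * k).+1 -> #|[set M | mt W k M]| <= dfact k.+1.
Proof.
move=> HW.
have sub : [set M | mt W k M] \subset \bigcup_(u in W) [set M | mt (W :\ u) k M].
  apply/subsetP => M; rewrite inE => HM.
  have : ~~ (W \subset cover M).
    apply/negP => /subset_leq_card; by rewrite HW (mt_cover HM) ltnn.
  case/subsetPn => u uW ucov.
  apply/bigcupP; exists u => //; rewrite inE.
  case/and3P: HM => /forall_inP He tM cM; apply/and3P; split => //.
  apply/forall_inP => e eM; have /andP[-> eW] := He e eM.
  apply/subsetP => x xe; rewrite !inE (subsetP eW) // andbT.
  apply/negP => /eqP xu; apply/negP: ucov; rewrite negbK -xu.
  by apply/bigcupP; exists e.
apply: leq_trans (subset_leq_card sub) _.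
apply: leq_trans (card_bigcup_le _ _) _.
apply: leq_trans (_ : \sum_(u in W) dfact k <= _).
  apply: leq_sum => u uW; apply: mt_perf.
  by move: (cardsD1 u W); rewrite uW HW; lia.
by rewrite sum_nat_const HW dfactS mulnC addn1.
Qed.

Definition st (T : finType) (A : {set {set {set T}}}) (S : {set {set T}}) :=
  [set M in A | S \subset M].

Lemma NP_mt n M : M \in near_perfect_matchings n -> mt setT (n - 1) M.
Proof.
rewrite inE => /andP[/andP[/forall_inP He /forall_inP Hd] cM].
apply/and3P; split => //.
- by apply/forall_inP => e eM; rewrite subsetT andbT; apply: He.
- apply/trivIsetP => e f eM fM ef.
  by have /forall_inP/(_ f fM)/implyP/(_ ef) := Hd e eM.
Qed.

Lemma mt_sub (V : finType) (W : {set V}) k (M S : {set {set V}}) :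
  mt W k M -> S \subset M -> mt W #|S| S.
Proof.
case/and3P => /forall_inP He tM _ SM; apply/and3P; split => //.
- by apply/forall_inP => e eS; apply: He; apply: (subsetP SM).
- exact: trivIsetS tM.
Qed.

Lemma card_st_NP n S : #|st (near_perfect_matchings n) S| <= dfact (n - #|S|).
Proof.
case: (posnP n) => [nz|n0].
  have -> : n - #|S| = 0 by move: nz; lia.
  rewrite /dfact big_ord0; apply/card_le1P => M1 HM1 M2.
  move: (HM1); rewrite !inE => /andP[/andP[_ /eqP c1] _].
  apply/idP/idP => [|/eqP ->]; last by move: HM1; rewrite !inE. move=> /andP[/andP[_ /eqP c2] _].
  have e1 : #|M1| == 0 by move/eqP: c1; lia.
  have e2 : #|M2| == 0 by move/eqP: c2; lia.
  by move: e1 e2; rewrite !cards_eq0 => /eqP -> /eqP ->.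
case: (set_0Vmem (st (near_perfect_matchings n) S)) => [->|[M0]]; first by rewrite cards0.
rewrite inE => /andP[M0NP SM0].
have mt0 := NP_mt M0NP.
have cS : #|S| <= n - 1 by case/and3P: mt0 => _ _ /eqP <-; apply: subset_leq_card.
have mtS := mt_sub mt0 SM0.
set k := n - 1 - #|S|.
set W := ~: cover S.
have cW : #|W| = (2 * k).+1.
  have := cardsC (cover S); rewrite (mt_cover mtS) card_ord -/W; lia.
have -> : n - #|S| = k.+1 by rewrite /k; lia.
apply: leq_trans (mt_near cW).
have inj : {in st (near_perfect_matchings n) S &, injective (fun M => M :\: S)}.
  move=> M1 M2; rewrite !inE => /andP[_ H1] /andP[_ H2] E.
  apply/setP => x; case xS: (x \in S); first by rewrite (subsetP H1) ?(subsetP H2).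
  by move/setP: E => /(_ x); rewrite !inE xS.
rewrite -(card_in_imset inj).
apply: subset_leq_card; apply/subsetP => M' /imsetP [M]; rewrite inE => /andP[MNP SM] ->.
rewrite inE; have := NP_mt MNP; case/and3P => /forall_inP He tM /eqP cM.
apply/and3P; split.
- apply/forall_inP => e; rewrite !inE => /andP[eS eM].
  have /andP[-> _] := He e eM; rewrite /=.
  apply/subsetP => x xe; rewrite inE; apply/negP => /bigcupP [f fS xf].
  have fM : f \in M by apply: (subsetP SM).
  have ef : e != f by apply/eqP => E; rewrite E fS in eS.
  have := trivIsetP tM e f eM fM ef; rewrite -setI_eq0 => /eqP dis.
  have : x \in e :&: f by rewrite inE xe xf.
  by rewrite dis inE.
- by apply: trivIsetS tM; apply: subsetDl.
- by rewrite cardsDS // cM.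
Qed.

Lemma exists_subset_card (T : finType) (B : {set T}) j :
  j <= #|B| -> exists2 U : {set T}, U \subset B & #|U| = j.
Proof.
move=> jB.
have : 0 < #|[set U : {set T} | U \subset B & #|U| == j]| by rewrite cards_draws bin_gt0.
by case/card_gt0P => U; rewrite inE => /andP[UB /eqP cU]; exists U.
Qed.

Lemma card_cover_sub (T : finType) (G : {set {set {set T}}}) (S : {set {set T}}) j :
  (forall M', M' \in G -> j <= #|M' :&: S|) ->
  #|G| <= \sum_(U in [set U : {set {set T}} | U \subset S & #|U| == j]) #|st G U|.
Proof.
move=> H; apply: leq_trans (card_bigcup_le _ _).
apply: subset_leq_card; apply/subsetP => M' M'G.
have [U US cU] := exists_subset_card (H M' M'G).
apply/bigcupP; exists U.
  by rewrite inE cU eqxx andbT; apply: subset_trans US (subsetIr _ _).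
by rewrite inE M'G; apply: subset_trans US (subsetIl _ _).
Qed.

Lemma st_sub (T : finType) (A B : {set {set {set T}}}) S :
  A \subset B -> st A S \subset st B S.
Proof. by move=> AB; apply/subsetP => M; rewrite !inE => /andP[/(subsetP AB) -> ->]. Qed.

Lemma card_st_le n (A : {set {set {set 'I_(2 * n - 1)}}}) S :
  A \subset near_perfect_matchings n -> #|st A S| <= dfact (n - #|S|).
Proof. by move=> AN; apply: leq_trans _ (card_st_NP S); apply/subset_leq_card/st_sub. Qed.

Lemma card_cover_NP n (G : {set {set {set 'I_(2 * n - 1)}}}) S j :
  G \subset near_perfect_matchings n ->
  (forall M', M' \in G -> j <= #|M' :&: S|) ->
  #|G| <= 'C(#|S|, j) * dfact (n - j).
Proof.
move=> GN H; apply: leq_trans (card_cover_sub H) _.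
rewrite -cards_draws -sum_nat_const; apply: leq_sum => U; rewrite inE => /andP[_ /eqP <-].
exact: card_st_le.
Qed.

Lemma st_st (T : finType) (A : {set {set {set T}}}) S U :
  st (st A S) U = st A (S :|: U).
Proof. by apply/setP => M; rewrite !inE subUset andbA. Qed.

Lemma st0 (T : finType) (A : {set {set {set T}}}) : st A set0 = A.
Proof. by apply/setP => M; rewrite !inE sub0set andbT. Qed.

Lemma one_sided n t (A : {set {set {set 'I_(2 * n - 1)}}}) (S M' : {set {set 'I_(2 * n - 1)}}) :
  A \subset near_perfect_matchings n -> M' \in near_perfect_matchings n -> 0 < n ->
  (forall U : {set {set 'I_(2 * n - 1)}}, [disjoint U & S] -> 0 < #|U| -> #|U| <= t ->
     #|st A (S :|: U)| * n ^ #|U| <= #|st A S|) ->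
  0 < #|st A S| ->
  (forall M, M \in st A S -> t <= #|M :&: M'|) ->
  t <= #|M' :&: S|.
Proof.
move=> AN M'N n0 Hsp Hpos Hint.
rewrite leqNgt; apply/negP => jt.
set j := #|M' :&: S| in jt.
set u := t - j.
have u0 : 0 < u by rewrite /u subn_gt0.
have Hc : forall M, M \in st A S -> u <= #|M :&: (M' :\: S)|.
  move=> M HM; have := Hint M HM.
  have SM : S \subset M by move: HM; rewrite inE => /andP[].
  have E : M :&: (M' :\: S) = (M :&: M') :\: S.
    by apply/setP => x; rewrite !inE; case: (x \in M); case: (x \in S); case: (x \in M').
  rewrite E cardsD.
  have : #|M :&: M' :&: S| <= j.
    by apply: subset_leq_card; apply/subsetP => x; rewrite !inE => /andP[/andP[_ ->] ->].
  rewrite /u; lia.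
have := card_cover_sub Hc.
set D := [set U | _ & _].
have cD : #|D| <= (n - 1) ^ u.
  rewrite cards_draws; apply: leq_trans (bin_le_exp _ _) _.
  rewrite leq_exp2r //; apply: leq_trans (subset_leq_card (subsetDl _ _)) _.
  by move: M'N; rewrite inE => /andP[_ /eqP ->].
move=> Hle.
have : #|st A S| * n ^ u <= #|D| * #|st A S|.
  apply: leq_trans (_ : (\sum_(U in D) #|st (st A S) U|) * n ^ u <= _).
    by rewrite leq_mul2r Hle orbT.
  rewrite -sum_nat_const big_distrl /=; apply: leq_sum => U; rewrite inE => /andP[US /eqP cU].
  rewrite st_st -cU; apply: Hsp; rewrite ?cU //.
    by rewrite -setI_eq0 -subset0; apply/subsetP => x; rewrite !inE => /andP[/(subsetP US)]; rewrite inE => /andP[/negbTE ->].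
  by rewrite /u leq_subr.
have : #|D| * #|st A S| < n ^ u * #|st A S|.
  rewrite ltn_pmul2r //; apply: leq_ltn_trans cD _.
  by rewrite ltn_exp2r //; lia.
move=> h1 h2; have := leq_ltn_trans h2 h1; by rewrite mulnC ltnn.
Qed.

Definition wt n (A : {set {set {set 'I_(2 * n - 1)}}}) (S : {set {set 'I_(2 * n - 1)}}) :=
  #|st A S| * n ^ #|S|.

Definition kernel n q (A : {set {set {set 'I_(2 * n - 1)}}}) : {set {set 'I_(2 * n - 1)}} :=
  [arg max_(S > set0 | #|S| <= q) wt A S].

Lemma peel n q t c (A : {set {set {set 'I_(2 * n - 1)}}}) :
  A \subset near_perfect_matchings n -> 0 < n -> t <= q ->
  (forall s, q - t < s -> s <= q -> c * (dfact (n - s) * n ^ s) < dfact (n - t)) ->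
  dfact (n - t) <= c * #|A| ->
  [/\ #|kernel q A| <= q - t, 0 < #|st A (kernel q A)| &
     forall U : {set {set 'I_(2 * n - 1)}}, [disjoint U & kernel q A] -> #|U| <= t ->
       #|st A (kernel q A :|: U)| * n ^ #|U| <= #|st A (kernel q A)|].
Proof.
move=> AN n0 tq Hcap Hbig.
rewrite /kernel; case: arg_maxnP; first by rewrite cards0.
move=> S Sq Smax.
have w0 : wt A set0 = #|A| by rewrite /wt st0 cards0 expn0 muln1.
have wS : #|A| <= wt A S by rewrite -w0; apply: Smax; rewrite cards0.
have Sqt : #|S| <= q - t.
  rewrite leqNgt; apply/negP => lt.
  have := Hcap _ lt Sq.
  have : c * wt A S <= c * (dfact (n - #|S|) * n ^ #|S|).
    by rewrite leq_mul2l /wt leq_mul2r (card_st_le _ AN) !orbT.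
  move=> h1 h2; have := leq_ltn_trans h1 h2.
  have : c * #|A| <= c * wt A S by rewrite leq_mul2l wS orbT.
  move=> h3 h4; have := leq_trans Hbig (leq_trans h3 (ltnW h4)).
  by move: (leq_ltn_trans (leq_trans Hbig h3) h4); rewrite ltnn.
split => //.
  have : 0 < dfact (n - t) := dfact_gt0 _.
  move=> h; have : 0 < c * #|A| := leq_trans h Hbig.
  rewrite muln_gt0 => /andP[_ Ap].
  have := leq_trans Ap wS; rewrite /wt muln_gt0 => /andP[] //.
move=> U dUS Ut.
have cSU : #|S :|: U| = #|S| + #|U|.
  by rewrite cardsU; move: dUS; rewrite -setI_eq0 setIC => /eqP ->; rewrite cards0 subn0.
have := Smax (S :|: U); rewrite /wt cSU.
have -> : #|S| + #|U| <= q by lia.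
move=> /(_ isT) h; rewrite -(@leq_pmul2r (n ^ #|S|)) ?expn_gt0 ?n0 // -mulnA -expnD addnC; exact: h.
Qed.

Lemma extra (X : finType) (T K Y : {set X}) t :
  #|T| = t -> ~~ (T \subset K) -> t <= #|Y :&: K| -> exists2 e, e \in Y :&: K & e \notin T.
Proof.
move=> cT TK tY; apply/exists_inP; rewrite -negb_forall_in; apply/negP => /forall_inP H.
have : Y :&: K \subset T :&: K.
  by apply/subsetP => x xYK; rewrite inE H //; move: xYK; rewrite inE => /andP[].
move/subset_leq_card => h; have := proper_card (properIl TK).
by rewrite cT; move=> h'; have := leq_ltn_trans (leq_trans tY h) h'; rewrite ltnn.
Qed.

Lemma card_e_T (X : finType) (T : {set X}) e : e \notin T -> #|e |: T| = #|T|.+1.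
Proof. by move=> eT; rewrite cardsU1 eT. Qed.

Lemma st_avoid n t (A : {set {set {set 'I_(2 * n - 1)}}}) (T M : {set {set 'I_(2 * n - 1)}}) :
  A \subset near_perfect_matchings n -> #|T| = t -> M \in near_perfect_matchings n ->
  ~~ (T \subset M) -> (forall M', M' \in st A T -> t <= #|M' :&: M|) ->
  #|st A T| <= (n - 1) * dfact (n - t.+1).
Proof.
move=> AN cT MN TM H.
have sub : st A T \subset \bigcup_(e in M :\: T) st A (e |: T).
  apply/subsetP => M' HM'; have [e] := extra cT TM (H M' HM').
  rewrite inE => /andP[eM' eM] eT; apply/bigcupP; exists e; first by rewrite inE eT.
  move: HM'; rewrite !inE => /andP[-> TM'] /=; by rewrite subUset sub1set eM' TM'.
apply: leq_trans (subset_leq_card sub) _; apply: leq_trans (card_bigcup_le _ _) _.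
apply: leq_trans (_ : \sum_(e in M :\: T) dfact (n - t.+1) <= _).
  apply: leq_sum => e; rewrite inE => /andP[eT _].
  by apply: leq_trans (card_st_le _ AN) _; rewrite card_e_T // cT.
rewrite sum_nat_const leq_mul2r; apply/orP; right.
apply: leq_trans (subset_leq_card (subsetDl _ _)) _.
by move: MN; rewrite inE => /andP[_ /eqP ->].
Qed.

Lemma kernel_prop n q t c (A G : {set {set {set 'I_(2 * n - 1)}}}) :
  A \subset near_perfect_matchings n -> G \subset near_perfect_matchings n -> 0 < n -> t <= q ->
  (forall s, q - t < s -> s <= q -> c * (dfact (n - s) * n ^ s) < dfact (n - t)) ->
  dfact (n - t) <= c * #|A| ->
  (forall M M', M \in A -> M' \in G -> t <= #|M :&: M'|) ->
  [/\ #|kernel q A| <= q, (forall M', M' \in G -> t <= #|M' :&: kernel q A|) &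
      exists2 M, M \in A & kernel q A \subset M].
Proof.
move=> AN GN n0 tq Hcap Hbig Hx.
have [k1 k2 k3] := peel AN n0 tq Hcap Hbig.
split.
- by apply: leq_trans k1 (leq_subr _ _).
- move=> M' M'G; apply: (one_sided AN (subsetP GN _ M'G) n0).
  + by move=> U dU _ cU; apply: k3.
  + exact: k2.
  + by move=> M; rewrite inE => /andP[MA _]; apply: Hx.
- by case/card_gt0P: k2 => M; rewrite inE => /andP[MA KM]; exists M.
Qed.

Lemma NP_card n M : M \in near_perfect_matchings n -> #|M| = n - 1.
Proof. by rewrite inE => /andP[_ /eqP]. Qed.

Lemma small_case n t c (F G : {set {set {set 'I_(2 * n - 1)}}}) :
  t < n -> 'C(n - 1, t) <= c ->
  F \subset near_perfect_matchings n -> G \subset near_perfect_matchings n ->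
  t_cross_intersecting t F G -> c * #|F| < dfact (n - t) ->
  #|F| * #|G| <= dfact (n - t) ^ 2.
Proof.
move=> tn Cc FN GN Hx Hs.
case: (set_0Vmem F) => [->|[M0 M0F]]; first by rewrite cards0.
have hG : #|G| <= 'C(n - 1, t) * dfact (n - t).
  rewrite -(NP_card (subsetP FN _ M0F)); apply: card_cover_NP => // M' M'G.
  by rewrite setIC; apply: Hx.
have c0 : 0 < c by apply: leq_trans Cc; rewrite bin_gt0; lia.
rewrite -(leq_pmul2l c0) mulnA.
apply: leq_trans (leq_mul (ltnW Hs) (leq_trans hG (leq_mul Cc (leqnn _)))) _.
by rewrite expnS expn1 mulnCA.
Qed.

Lemma ar_gen c x y L K : 0 < c -> c * x * y <= L -> L <= c * K -> x * y <= K.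
Proof.
move=> c0 h1 h2; rewrite -(leq_pmul2l c0) mulnA; exact: leq_trans h1 h2.
Qed.

Lemma ar3 c D1 R Q x y : Q*(c+2*R) <= c*R -> c*x <= c*D1 + 2*(D1*R) -> y <= Q*(D1*R) -> 0<c ->
  x*y <= (D1*R)^2.
Proof.
move=> h1 h2 h3 c0; apply: (ar_gen c0 (leq_mul h2 h3)).
have -> : (c*D1 + 2*(D1*R)) * (Q*(D1*R)) = (Q*(c+2*R)) * (D1*D1*R) by lia.
apply: leq_trans (leq_mul h1 (leqnn _)) _.
by rewrite leq_eqVlt; apply/orP; left; apply/eqP; lia.
Qed.

Lemma ar4 Q q R D1 x y : Q*Q*q <= R -> x <= Q*(D1*R) -> y <= Q*q*D1 -> x*y <= (D1*R)^2.
Proof.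
move=> h1 h2 h3; apply: leq_trans (leq_mul h2 h3) _.
have -> : Q * (D1 * R) * (Q * q * D1) = (Q*Q*q) * (D1*D1*R) by lia.
apply: leq_trans (leq_mul h1 (leqnn _)) _.
by rewrite leq_eqVlt; apply/orP; left; apply/eqP; lia.
Qed.

Lemma ar5a c m Q q R D1 x y : (c+1)*(m + Q*q) <= c*R -> 0 < c ->
  c*x <= c*(D1*R) + D1*R -> y <= m*D1 + Q*q*D1 -> x*y <= (D1*R)^2.
Proof.
move=> h1 c0 h2 h3; apply: (ar_gen c0 (leq_mul h2 h3)).
have -> : (c*(D1*R) + D1*R) * (m*D1 + Q*q*D1) = ((c+1)*(m + Q*q)) * (D1*R*D1) by lia.
apply: leq_trans (leq_mul h1 (leqnn _)) _.
by rewrite leq_eqVlt; apply/orP; left; apply/eqP; lia.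
Qed.

Lemma ar5b c m Q q R D1 x y : (c * m + R)*(R + Q*q) <= c*R*R -> 0 < c ->
  c*x <= c*(m*D1) + D1*R -> y <= D1*R + Q*q*D1 -> x*y <= (D1*R)^2.
Proof.
move=> h1 c0 h2 h3; apply: (ar_gen c0 (leq_mul h2 h3)).
have -> : (c*(m*D1) + D1*R) * (D1*R + Q*q*D1) = ((c * m + R)*(R + Q*q)) * (D1*D1) by lia.
apply: leq_trans (leq_mul h1 (leqnn _)) _.
by rewrite leq_eqVlt; apply/orP; left; apply/eqP; lia.
Qed.

Lemma st_in (T : finType) (A : {set {set {set T}}}) S M : M \in st A S -> M \in A.
Proof. by rewrite inE => /andP[]. Qed.

Lemma large_case n q t c (F G : {set {set {set 'I_(2 * n - 1)}}}) :
  0 < n -> t < n -> t <= q ->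
  (forall s, q - t < s -> s <= q -> c * (dfact (n - s) * n ^ s) < dfact (n - t)) ->
  'C(q, t) * (c + 2 * (2 * (n - t - 1)).+1) <= c * (2 * (n - t - 1)).+1 ->
  'C(q, t) * 'C(q, t) * q <= (2 * (n - t - 1)).+1 ->
  (c + 1) * (n - 1 + 'C(q, t) * q) <= c * (2 * (n - t - 1)).+1 ->
  (c * (n - 1) + (2 * (n - t - 1)).+1) * ((2 * (n - t - 1)).+1 + 'C(q, t) * q)
     <= c * (2 * (n - t - 1)).+1 * (2 * (n - t - 1)).+1 ->
  F \subset near_perfect_matchings n -> G \subset near_perfect_matchings n ->
  t_cross_intersecting t F G ->
  dfact (n - t) <= c * #|F| -> dfact (n - t) <= c * #|G| ->
  #|F| * #|G| <= dfact (n - t) ^ 2.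
Proof.
move=> n0 tn tq Hcap HP3 HP4 HP5a HP5b FN GN Hx HbF HbG.
set R := (2 * (n - t - 1)).+1 in HP3 HP4 HP5a HP5b.
set D := dfact (n - t) in Hcap HbF HbG *.
set D1 := dfact (n - t.+1).
set Q := 'C(q, t) in HP3 HP4 HP5a HP5b.
have DR : D = D1 * R.
  rewrite /D /D1 /R; have -> : n - t = (n - t.+1).+1 by lia.
  by rewrite dfactS addn1; congr (_ * _.+1); lia.
have c0 : 0 < c.
  have : 0 < D := dfact_gt0 _.
  by move=> h; move: (leq_trans h HbF); rewrite muln_gt0 => /andP[].
have HxGF : forall M' M, M' \in G -> M \in F -> t <= #|M' :&: M|.
  by move=> M' M M'G MF; rewrite setIC; apply: Hx.
have [kF1 kF2 kF3] := kernel_prop FN GN n0 tq Hcap HbF Hx.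
have [kG1 kG2 kG3] := kernel_prop GN FN n0 tq Hcap HbG HxGF.
set S1 := kernel q F in kF1 kF2 kF3.
have hG : #|G| <= Q * D.
  apply: leq_trans (card_cover_NP GN kF2) _.
  by rewrite leq_mul2r leq_bin2l ?orbT.
have hF : #|F| <= Q * D.
  apply: leq_trans (card_cover_NP FN kG2) _.
  by rewrite leq_mul2r leq_bin2l ?orbT.
pose good T := c * #|F :\: st F T| < D.
pose Ts := [set T : {set {set 'I_(2 * n - 1)}} | T \subset S1 & #|T| == t].
pose K T := kernel q (F :\: st F T).
have Kprop : forall T, T \in Ts -> ~~ good T ->
    (forall M', M' \in G -> t <= #|M' :&: K T|) /\ ~~ (T \subset K T) /\ #|K T| <= q.
  move=> T TTs bT.
  have FTN : F :\: st F T \subset near_perfect_matchings n.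
    by apply: subset_trans FN; apply: subsetDl.
  have HbT : D <= c * #|F :\: st F T| by rewrite leqNgt.
  have HxT : forall M M', M \in F :\: st F T -> M' \in G -> t <= #|M :&: M'|.
    by move=> M M'; rewrite inE => /andP[_ MF]; apply: Hx.
  have [k1 k2 [M MFT KM]] := kernel_prop FTN GN n0 tq Hcap HbT HxT.
  split => //; split => //.
  apply/negP => TK; move: MFT; rewrite !inE => /andP[/negP nT MF]; apply: nT.
  by rewrite (subset_trans TK KM) MF.
pose Bad := \bigcup_(T in Ts | ~~ good T) \bigcup_(e in K T :\: T) st G (e |: T).
have cBad : #|Bad| <= Q * q * D1.
  apply: leq_trans (card_bigcup_le _ _) _.
  apply: leq_trans (_ : \sum_(T in Ts) q * D1 <= _); last first.
    rewrite sum_nat_const mulnA leq_mul2r; apply/orP; right.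
    by rewrite cards_draws leq_mul2r leq_bin2l ?orbT.
  rewrite big_mkcondr /=; apply: leq_sum => T TTs.
  case: ifP => // bT; have [_ [_ kq]] := Kprop T TTs bT.
  apply: leq_trans (card_bigcup_le _ _) _.
  apply: leq_trans (_ : \sum_(e in K T :\: T) D1 <= _).
    apply: leq_sum => e; rewrite inE => /andP[eT _].
    apply: leq_trans (card_st_le _ GN) _.
    move: TTs; rewrite inE => /andP[_ /eqP cT].
    by rewrite card_e_T // cT.
  rewrite sum_nat_const leq_mul2r; apply/orP; right.
  by apply: leq_trans (subset_leq_card (subsetDl _ _)) kq.
pose goodset := [set T in Ts | good T].
have HX : forall M', M' \in G -> (exists2 T, T \in goodset & T \subset M') \/ M' \in Bad.
  move=> M' M'G.
  have [T TS cT] := exists_subset_card (kF2 M' M'G).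
  have TTs : T \in Ts by rewrite inE cT eqxx andbT (subset_trans TS (subsetIr _ _)).
  have TM' : T \subset M' := subset_trans TS (subsetIl _ _).
  case gT: (good T); first by left; exists T => //; rewrite inE TTs gT.
  right; have [h1 [h2 _]] := Kprop T TTs (negbT gT).
  have [e] := extra cT h2 (h1 M' M'G).
  rewrite inE => /andP[eM' eK] eT.
  apply/bigcupP; exists T; first by rewrite TTs gT.
  apply/bigcupP; exists e; first by rewrite inE eT eK.
  by rewrite inE M'G subUset sub1set eM' TM'.
have [g2|] := ltnP 1 #|goodset|.
  case/card_gt1P: g2 => T1 [T2 [H1 H2 T12]]; move: H1 H2; rewrite !inE => /andP[/andP[_ /eqP c1] g1] /andP[/andP[_ /eqP c2] g2].
  have cU : t < #|T1 :|: T2|.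
    rewrite ltnNge; apply/negP => h.
    have e1 : T1 = T1 :|: T2 by apply/eqP; rewrite eqEcard subsetUl c1 h.
    have e2 : T2 = T1 :|: T2 by apply/eqP; rewrite eqEcard subsetUr c2 h.
    by move/eqP: T12; apply; rewrite [LHS]e1 [RHS]e2.
  have sub : F \subset st F (T1 :|: T2) :|: (F :\: st F T1) :|: (F :\: st F T2).
    apply/subsetP => M MF; rewrite !inE MF /= subUset.
    by case: (T1 \subset M); case: (T2 \subset M).
  have hc : #|F| <= #|st F (T1 :|: T2)| + #|F :\: st F T1| + #|F :\: st F T2|.
    apply: leq_trans (subset_leq_card sub) _.
    apply: leq_trans (leq_card_setU _ _) _; rewrite leq_add2r.
    exact: leq_card_setU.
  have hs : #|st F (T1 :|: T2)| <= D1.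
    apply: leq_trans (card_st_le _ FN) _; apply: dfact_mono; lia.
  have hF2 : c * #|F| <= c * D1 + 2 * (D1 * R).
    rewrite -DR; apply: leq_trans (leq_mul (leqnn c) hc) _.
    have -> : 2 * D = D + D by rewrite addnn mul2n.
    rewrite !mulnDr -addnA leq_add //; first by rewrite leq_mul2l hs orbT.
    by rewrite leq_add // ltnW.
  rewrite DR; apply: ar3 HP3 hF2 _ c0; by rewrite -DR.
rewrite leq_eqVlt ltnS leqn0 => /orP[/eqP g1|/eqP g0].
  move/eqP: g1; case/cards1P => Ts0 gE.
  have Ts0in : Ts0 \in goodset by rewrite gE set11.
  move: (Ts0in); rewrite inE => /andP[]; rewrite inE => /andP[_ /eqP cT0] gT0.
  have hGsplit : #|G| <= #|st G Ts0| + Q * q * D1.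
    apply: leq_trans _ (leq_add (leqnn _) cBad).
    apply: leq_trans (leq_card_setU _ _); apply: subset_leq_card; apply/subsetP => M' M'G.
    case: (HX M' M'G) => [[T TG TM']|MB]; last by rewrite inE MB orbT.
    by move: TG; rewrite gE inE => /eqP TE; rewrite !inE M'G -TE TM'.
  have hFsplit : c * #|F| <= c * #|st F Ts0| + D.
    apply: leq_trans _ (leq_add (leqnn _) (ltnW gT0)).
    rewrite -mulnDr leq_mul2l; apply/orP; right.
    apply: leq_trans (leq_card_setU _ _); apply: subset_leq_card; apply/subsetP => M MF.
    by rewrite !inE MF; case: (Ts0 \subset M).
  have hstF : #|st F Ts0| <= D by apply: leq_trans (card_st_le _ FN) _; rewrite cT0.
  have hstG : #|st G Ts0| <= D by apply: leq_trans (card_st_le _ GN) _; rewrite cT0.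
  case: (boolP [exists M in F, ~~ (Ts0 \subset M)]) => [/exists_inP [M MF nTM]|nF].
    have hA := st_avoid GN cT0 (subsetP FN _ MF) nTM (fun M' HM' => HxGF M' M (st_in HM') MF).
    rewrite DR; apply: (ar5a HP5a c0).
      by rewrite -DR; apply: leq_trans hFsplit _; rewrite leq_add2r leq_mul2l hstF orbT.
    by apply: leq_trans hGsplit _; rewrite leq_add2r.
  case: (boolP [exists M' in G, ~~ (Ts0 \subset M')]) => [/exists_inP [M' M'G nTM']|nG].
    have hB := st_avoid FN cT0 (subsetP GN _ M'G) nTM' (fun M HM => Hx M M' (st_in HM) M'G).
    rewrite DR; apply: (ar5b HP5b c0).
      by rewrite -DR; apply: leq_trans hFsplit _; rewrite leq_add2r leq_mul2l hB orbT.
    by rewrite -DR; apply: leq_trans hGsplit _; rewrite leq_add2r.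
  have eF : #|F| <= D.
    apply: leq_trans hstF; apply: subset_leq_card; apply/subsetP => M MF.
    rewrite inE MF /=; apply: contraR nF => nT; apply/exists_inP; by exists M.
  have eG : #|G| <= D.
    apply: leq_trans hstG; apply: subset_leq_card; apply/subsetP => M MG.
    rewrite inE MG /=; apply: contraR nG => nT; apply/exists_inP; by exists M.
  by rewrite expnS expn1 leq_mul.
rewrite DR; apply: (ar4 HP4); first by rewrite -DR.
apply: leq_trans cBad; apply: subset_leq_card; apply/subsetP => M' M'G.
case: (HX M' M'G) => [[T TG _]|//].
by move/eqP: g0; rewrite cards_eq0 => /eqP g0; rewrite g0 inE in TG.
Qed.

Lemma pow_le d L : 0 < d -> L ^ d <= d ^ d * 2 ^ L.
Proof.
move=> d0; set M := L %/ d.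
have h1 : L <= d * M.+1 by rewrite mulnC ltnW // ltn_ceil.
have h2 : M.+1 <= 2 ^ M by apply: ltn_expl.
have h3 : M * d <= L by rewrite leq_divM.
apply: leq_trans (_ : (d * M.+1) ^ d <= _); first by rewrite leq_exp2r.
rewrite expnMn leq_mul2l; apply/orP; right.
apply: leq_trans (_ : (2 ^ M) ^ d <= _); first by rewrite leq_exp2r.
by rewrite -expnM leq_exp2l.
Qed.

Lemma poly_exp B d : exists L0, forall L, L0 <= L -> B * L.+1 ^ d <= 2 ^ L.
Proof.
exists (2 * B * d.+1 ^ d.+1) => L hL.
have := pow_le L.+1 (ltn0Sn d).
rewrite expnS (expnS 2) => h.
rewrite -(leq_pmul2l (ltn0Sn L)) mulnCA.
apply: leq_trans (leq_mul (leqnn B) h) _.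
rewrite mulnA mulnCA mulnA; apply: leq_mul => //.
by rewrite mulnA; apply: leqW.
Qed.

Lemma dfact_ratio k m : dfact k * (2 * k + 1) ^ m <= dfact (k + m).
Proof.
elim: m => [|m IH]; first by rewrite expn0 muln1 addn0.
rewrite (addnS k m) dfactS expnS mulnCA mulnC leq_mul //.
by rewrite leq_add2r leq_mul2l leq_addr orbT.
Qed.

Lemma exp_base a b e : a <= b -> a ^ e <= b ^ e.
Proof. by move=> ab; elim: e => // e IH; rewrite !expnS leq_mul. Qed.

Lemma pow32 m j : 2 * j <= m -> 2 ^ m * 2 ^ j <= 3 ^ m.
Proof.
move=> h; rewrite -(subnK h) !expnD -mulnA leq_mul ?exp_base //.
by rewrite !expn0 !muln1 -!expnMn exp_base.
Qed.

Lemma hcap n t q j : q = 2 * t + 2 * j -> 4 * q <= n -> 10 * n ^ (2 * t + 1) < 2 ^ j ->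
  forall s, q - t < s -> s <= q -> 10 * n ^ (t + 1) * (dfact (n - s) * n ^ s) < dfact (n - t).
Proof.
move=> qE nq hj s h1 h2.
set m := s - t.
have sE : s = t + m by rewrite /m; lia.
have mj : 2 * j <= m by rewrite /m; lia.
have A := dfact_ratio (n - s) m.
have e1 : n - s + m = n - t by rewrite /m; lia.
rewrite e1 in A.
set X := 2 * (n - s) + 1 in A.
have B : 3 * n <= 2 * X by rewrite /X; lia.
have Dt0 := dfact_gt0 (n - t).
have p3 : 0 < 3 ^ m by rewrite expn_gt0.
rewrite -(ltn_pmul2r p3).
have E1 : 10 * n ^ (t + 1) * (dfact (n - s) * n ^ s) * 3 ^ m
          = 10 * n ^ (2 * t + 1) * dfact (n - s) * (3 * n) ^ m.
  have e2 : n ^ (2 * t + 1) = n ^ t * n ^ t * n by rewrite mul2n -addnn !expnD expn1.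
  rewrite e2 sE expnMn !expnD expn1; lia.
rewrite E1.
apply: (@leq_ltn_trans (10 * n ^ (2 * t + 1) * 2 ^ m * dfact (n - t))).
  apply: (@leq_trans (10 * n ^ (2 * t + 1) * dfact (n - s) * (2 ^ m * X ^ m))).
    by rewrite leq_mul2l -expnMn exp_base // orbT.
  have -> : 10 * n ^ (2 * t + 1) * dfact (n - s) * (2 ^ m * X ^ m)
          = 10 * n ^ (2 * t + 1) * 2 ^ m * (dfact (n - s) * X ^ m) by lia.
  by rewrite leq_mul2l A orbT.
rewrite mulnC ltn_pmul2l //.
apply: (@leq_trans (2 ^ j * 2 ^ m)); last by rewrite mulnC pow32.
by rewrite ltn_pmul2r // expn_gt0.
Qed.

Lemma p4 Q c R : 2 * Q <= R -> 2 * R <= c -> Q * (c + 2 * R) <= c * R.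
Proof. move=> h1 h2. nia. Qed.

Lemma p6 c n X R t : 10 <= c -> 11 * X + 20 * t + 1 <= 9 * n -> R = 2 * n - 2 * t - 1 -> 4 * t + 2 <= n -> (c + 1) * (n - 1 + X) <= c * R.
Proof. move=> h1 h2 h3 h4. nia. Qed.

Lemma p7 c n X R t : 2 * n <= c -> R = 2 * n - 2 * t - 1 -> 4 * t + 2 <= n -> 2 * X <= n -> (c * (n - 1) + R) * (R + X) <= c * R * R.
Proof. move=> h1 h2 h3 h4. nia. Qed.

Lemma params n t q : 0 < q -> t <= q -> 22 * q ^ (2 * t + 1) + 20 * t + 4 <= n ->
  [/\ 'C(n - 1, t) <= 10 * n ^ (t + 1),
      'C(q, t) * (10 * n ^ (t + 1) + 2 * (2 * (n - t - 1)).+1) <= 10 * n ^ (t + 1) * (2 * (n - t - 1)).+1,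
      'C(q, t) * 'C(q, t) * q <= (2 * (n - t - 1)).+1,
      (10 * n ^ (t + 1) + 1) * (n - 1 + 'C(q, t) * q) <= 10 * n ^ (t + 1) * (2 * (n - t - 1)).+1 &
      (10 * n ^ (t + 1) * (n - 1) + (2 * (n - t - 1)).+1) * ((2 * (n - t - 1)).+1 + 'C(q, t) * q)
        <= 10 * n ^ (t + 1) * (2 * (n - t - 1)).+1 * (2 * (n - t - 1)).+1].
Proof.
move=> q0 tq hn.
set P := q ^ (2 * t + 1) in hn.
set c := 10 * n ^ (t + 1).
set R := (2 * (n - t - 1)).+1.
set Q := 'C(q, t).
have hQ : Q <= q ^ t by apply: bin_le_exp.
have hQ1 : Q <= P by apply: leq_trans hQ _; rewrite leq_pexp2l //; lia.
have hQ2 : Q * q <= P.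
  apply: leq_trans (leq_mul hQ (leqnn q)) _; rewrite -expnSr leq_pexp2l //; lia.
have hQ3 : Q * Q * q <= P.
  apply: leq_trans (leq_mul (leq_mul hQ hQ) (leqnn q)) _.
  by rewrite -expnD -expnSr leq_eqVlt; apply/orP; left; apply/eqP; congr (_ ^ _); lia.
have n1 : 0 < n by lia.
have hnc : n <= n ^ (t + 1) by rewrite -{1}(expn1 n) leq_pexp2l // addn1.
have c10 : 10 <= c by rewrite /c -{1}(muln1 10) leq_mul2l expn_gt0 n1.
have c2n : 2 * n <= c by rewrite /c; lia.
have eR : R = 2 * n - 2 * t - 1 by rewrite /R; lia.
split.
- apply: leq_trans (bin_le_exp _ _) _; apply: leq_trans _ (leq_pmull _ _) => //.
  apply: leq_trans (_ : n ^ t <= _); first by apply: exp_base; lia.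
  by rewrite leq_pexp2l // addn1.
- by apply: p4; lia.
- by lia.
- by apply: (p6 (t := t)) => //; lia.
- by apply: (p7 (t := t)) => //; lia.
Qed.

Theorem mainTheorem11 (t : nat) :
  exists n0 : nat, forall n : nat, n0 <= n ->
    forall F G : {set {set {set 'I_(2 * n - 1)}}},
      F \subset near_perfect_matchings n ->
      G \subset near_perfect_matchings n ->
      t_cross_intersecting t F G ->
      #|F| * #|G| <= (dfact (n - t)) ^ 2.
Proof.
set d := 2 * t + 1.
set a := 6 * t + 10.
have [L0 HL0] := poly_exp (22 * a ^ d + 20 * t + 4 + 4 * a) d.
exists (2 ^ L0) => n hn F G FN GN Hx.
have n0 : 0 < n by apply: leq_trans hn; rewrite expn_gt0.
set L := trunc_log 2 n.
have hL0 : L0 <= L by apply: trunc_log_max.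
have hnL : 2 ^ L <= n by apply: trunc_logP.
have hnL1 : n < 2 ^ L.+1 by apply: trunc_log_ltn.
set j := 4 + d * L.+1.
set q := 2 * t + 2 * j.
have hj : 10 * n ^ d < 2 ^ j.
  have : n ^ d < (2 ^ L.+1) ^ d by rewrite ltn_exp2r // /d addn1.
  rewrite /j expnD -expnM mulnC expnM => h.
  have : 0 < (2 ^ L.+1) ^ d by rewrite !expn_gt0.
  move: h; set y := (2 ^ L.+1) ^ d; set x := n ^ d; lia.
have hqa : q <= a * L.+1 by rewrite /q /j /a /d; nia.
have hd : 0 < d by rewrite /d addn1.
have hbig : 22 * q ^ d + 20 * t + 4 + 4 * q <= n.
  apply: leq_trans hnL; apply: leq_trans (HL0 L hL0).
  have h1 : q ^ d <= a ^ d * L.+1 ^ d by rewrite -expnMn exp_base.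
  have h2 : L.+1 <= L.+1 ^ d by rewrite -{1}(expn1 L.+1) leq_pexp2l.
  have h3 : 1 <= L.+1 ^ d by rewrite expn_gt0.
  set u := L.+1 ^ d in h1 h2 h3 *; set v := a ^ d in h1 *; set w := q ^ d in h1 *.
  nia.
have q0 : 0 < q by rewrite /q /j; lia.
have tq : t <= q by rewrite /q; lia.
have tn : t < n by lia.
have hb2 : 22 * q ^ (2 * t + 1) + 20 * t + 4 <= n by move: hbig; rewrite /d; lia.
have [P3 P4 P5 P6 P7] := params q0 tq hb2.
have h4q : 4 * q <= n by lia.
have Hcap := hcap (erefl q) h4q hj.
rewrite -/d in Hcap.
case: (ltnP (10 * n ^ (t + 1) * #|F|) (dfact (n - t))) => hF.
  exact: (small_case tn P3 FN GN Hx hF).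
case: (ltnP (10 * n ^ (t + 1) * #|G|) (dfact (n - t))) => hG.
  rewrite mulnC; apply: (small_case tn P3 GN FN _ hG).
  by move=> M' M M'G MF; rewrite setIC; apply: Hx.
exact: (large_case n0 tn tq Hcap P4 P5 P6 P7 FN GN Hx hF hG).
Qed.
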